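(* Let $x$ be fixed observed data and let $p(x,z)$, $z\in\mathbb{R}^d$, be a positive, differentiable joint density (in $z$). Let $K\ge 1$, $n\in\{1,\dots,K\}$, and let $q$ be a probability density on $\mathbb{R}^d$ with finite second moment. Set $w(z):=p(x,z)/q(z)$. For a probability density $q_n$ on $\mathbb{R}^d$ with finite second moment define $$\mathcal{F}_n(q_n):=\mathbb{E}_{z_n\sim q_n}\Big[\mathbb{E}_{\{z_i\}_{i\neq n}\overset{i.i.d.}{\sim} q}\log\Big(\frac1K\frac{p(x,z_n)}{q_n(z_n)}+\frac1K\sum_{i\neq n}\frac{p(x,z_i)}{q(z_i)}\Big)\Big].$$ Suppose standard regularity conditions hold that allow interchanging derivatives (in $\epsilon$ and in $z$) with expectations/integrals. Then the Wasserstein gradient of $\mathcal{F}_n$ at $q_n=q$ is the map $\mathbb{R}^d\to\mathbb{R}^d$ given by $$\nabla^W[\mathcal{F}_n(q)](z_n)=\mathbb{E}_{\{z_i\}_{i\neq n}\overset{i.i.d.}{\sim} q}\left[\left(\frac{w(z_n)}{\sum_{i=1}^K w(z_i)}\right)^2\nabla_{z_n}\log w(z_n)\right].$$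
   Context: For a functional $\mathcal{F}$ on the space $\mathcal{P}_2(\mathbb{R}^d)$ of probability measures with finite second moment, the first variation at $\mu$ is a function $\frac{\delta\mathcal{F}(\mu)}{\delta\mu}:\mathbb{R}^d\to\mathbb{R}$ such that $\lim_{\epsilon\to0^+}\frac{\mathcal{F}(\mu+\epsilon\nu)-\mathcal{F}(\mu)}{\epsilon}=\int\frac{\delta\mathcal{F}(\mu)}{\delta\mu}(x)\,\nu(dx)$ for all signed measures $\nu$ with $\mu+\epsilon\nu\in\mathcal{P}_2(\mathbb{R}^d)$ for small $\epsilon>0$. The Wasserstein gradient is $[\nabla^W\mathcal{F}(\mu)](x):=\nabla_x\frac{\delta\mathcal{F}(\mu)}{\delta\mu}(x)$. In the displayed formula, $z_n$ is the point of evaluation and $z_i$, $i\ne n$, are integrated out. *)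

(* Defs.v *)
From HB Require Import structures.
From mathcomp Require Import all_boot all_order all_algebra.
From mathcomp Require Import all_classical all_reals all_analysis.
Set Implicit Arguments. Unset Strict Implicit. Unset Printing Implicit Defensive.
Import Order.TTheory GRing.Theory Num.Theory.
Import numFieldNormedType.Exports.
Local Open Scope classical_set_scope.
Local Open Scope ring_scope.

Section defs.
Variables (R : realType) (d : nat).

Definition Rd := g_sigma_algebraType (@open 'rV[R]_d).

(* mu is Lebesgue measure on R^d: the Borel measure giving every closed
   box its volume (this characterizes Lebesgue measure on Borel sets). *)
Definition is_lebesgue_Rd (mu : {measure set Rd -> \bar R}) : Prop :=
  forall a b : 'rV[R]_d, (forall i, a 0 i <= b 0 i) ->
    mu [set x : Rd | forall i, a 0 i <= x 0 i <= b 0 i] =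
    (\prod_(i < d) (b 0 i - a 0 i))%:E.

Variable mu : {measure set Rd -> \bar R}.

Definition is_P2_density (f : 'rV[R]_d -> R) : Prop :=
  [/\ measurable_fun [set: Rd] f,
      (forall z, 0 <= f z),
      (\int[mu]_z (f z)%:E = 1)%E &
      mu.-integrable [set: Rd] (fun z => (f z * `|z| ^+ 2)%:E)].

Definition grad (f : 'rV[R]_d -> R) (z : 'rV[R]_d) : 'rV[R]_d :=
  \row_(j < d) 'D_(delta_mx 0 j) f z.

Fixpoint iid_exp (q : 'rV[R]_d -> R) (m : nat) (f : seq 'rV[R]_d -> R) : R :=
  match m with
  | 0 => f [::]
  | m'.+1 => Rintegral mu [set: Rd]
               (fun z : 'rV[R]_d => q z * iid_exp q m' (fun s => f (z :: s)))
  end.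

(* A first variation of the functional F at the density q0
   (perturbations nu = h * mu by signed densities h such that q0 + eps h
   is a P2 density for all small eps > 0). *)
Definition is_first_variation (F : ('rV[R]_d -> R) -> R)
    (q0 : 'rV[R]_d -> R) (V : 'rV[R]_d -> R) : Prop :=
  forall h : 'rV[R]_d -> R, measurable_fun [set: Rd] h ->
    (exists2 e0 : R, 0 < e0 &
       forall e : R, 0 < e < e0 -> is_P2_density (fun z => q0 z + e * h z)) ->
    (fun e : R => (F (fun z => q0 z + e * h z) - F q0) / e) @ 0^'+ -->
      Rintegral mu [set: Rd] (fun z => V z * h z).

End defs.

(* z_n at position n, the other K-1 samples (listed in s, in order) at the
   remaining positions i <> n. *)
Definition ins {R : realType} {d K : nat} (n : 'I_K) (zn : 'rV[R]_d)
    (s : seq 'rV[R]_d) (i : 'I_K) : 'rV[R]_d :=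
  if (i < n)%N then nth zn s i else if i == n then zn else nth zn s i.-1.

Definition Fint {R : realType} {d : nat} (p q : 'rV[R]_d -> R) (K : nat)
    (n : 'I_K) (qn : 'rV[R]_d -> R) (zn : 'rV[R]_d) (s : seq 'rV[R]_d) : R :=
  ln (K%:R^-1 * (p zn / qn zn) +
      K%:R^-1 * \sum_(i < K | i != n) p (ins n zn s i) / q (ins n zn s i)).

Definition Fn {R : realType} {d : nat} (mu : {measure set Rd R d -> \bar R})
    (p q : 'rV[R]_d -> R) (K : nat) (n : 'I_K) (qn : 'rV[R]_d -> R) : R :=
  Rintegral mu [set: Rd R d]
    (fun zn : 'rV[R]_d => qn zn * iid_exp mu q K.-1 (Fint p q n qn zn)).

(* Main.v *)
Require Import Defs.
From HB Require Import structures.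
From mathcomp Require Import all_boot all_order all_algebra.
From mathcomp Require Import all_classical all_reals all_analysis.
From mathcomp Require Import ring lra zify.
Import Order.TTheory GRing.Theory Num.Theory.
Import numFieldNormedType.Exports.
Local Open Scope classical_set_scope.
Local Open Scope ring_scope.
Set Implicit Arguments. Unset Strict Implicit.

Section rint.
Context d (T : measurableType d) (R : realType) (mu : {measure set T -> \bar R}).
Import HBNNSimple.

Lemma nnZ (g : T -> \bar R) (k : R) : (forall x, (0 <= g x)%E) -> 0 < k ->
  (\int[mu]_x (k%:E * g x) = k%:E * \int[mu]_x g x)%E.
Proof.
move=> g0 k0.
rewrite !ge0_integralTE //; last by move=> x; rewrite mule_ge0 // lee_fin ltW.
rewrite -ereal_sup_pZl //; congr ereal_sup; apply/seteqP; split.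
- move=> _ [h /= hle <-].
  have ki0 : 0 <= k^-1 by rewrite invr_ge0 ltW.
  exists (sintegral mu (scale_nnsfun h ki0)).
    exists (scale_nnsfun h ki0) => //= x.
    have := hle x; have := g0 x; case: (g x) => [r||] //=.
      by rewrite -EFinM !lee_fin => _ hr; rewrite ler_pdivrMl.
    by move=> _ _; rewrite leey.
  rewrite -sintegralrM.
  apply: eq_sintegral => x /=; rewrite mulrA mulfV ?mul1r //; exact: lt0r_neq0.
- move=> _ [_ [h /= hle <-] <-].
  exists (scale_nnsfun h (ltW k0)).
    move=> x /=; have := hle x; have := g0 x; case: (g x) => [r||] //=.
      by rewrite -EFinM !lee_fin => _ hr; rewrite ler_pM2l.
    by move=> _ _; rewrite gt0_muley ?lte_fin // leey.
  by rewrite -sintegralrM (_ : (_ \* _)%R = scale_nnsfun h (ltW k0)).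
Qed.

Lemma fine_pscale (A B : \bar R) (c : R) : (0 <= A)%E -> (0 <= B)%E -> 0 < c ->
  fine (c%:E * A - c%:E * B)%E = c * fine (A - B)%E.
Proof.
move=> + + c0; case: A => [a||] //; case: B => [b||] //= _ _.
- by rewrite mulrBr.
- by rewrite gt0_muley ?lte_fin //= mulr0.
- by rewrite gt0_muley ?lte_fin //= mulr0.
- by rewrite gt0_muley ?lte_fin //= mulr0.
Qed.

Lemma fine_swap (A B : \bar R) : (0 <= A)%E -> (0 <= B)%E ->
  fine (B - A)%E = - fine (A - B)%E.
Proof.
case: A => [a||] //; case: B => [b||] //= _ _; rewrite ?oppr0 //.
by rewrite opprB.
Qed.

Lemma Rint_pscale (f : T -> R) (c : R) : 0 < c ->
  Rintegral mu setT (fun x => c * f x) = c * Rintegral mu setT f.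
Proof.
move=> c0; rewrite /Rintegral integralE [in RHS]integralE.
have -> : (fun x => (c * f x)%:E)^\+%E = (fun x => c%:E * (fun x => (f x)%:E)^\+ x)%E.
  apply/funext => x; rewrite !funeposE; case: (leP 0 (f x)) => fx.
    have cx : 0 <= c * f x by rewrite mulr_ge0 // ltW.
    by rewrite !max_l ?lee_fin.
  have cx : c * f x < 0 by rewrite pmulr_rlt0.
  by rewrite !max_r ?lee_fin ?mule0 // ltW.
have -> : (fun x => (c * f x)%:E)^\-%E = (fun x => c%:E * (fun x => (f x)%:E)^\- x)%E.
  apply/funext => x; rewrite !funenegE; case: (leP 0 (f x)) => fx.
    have cx : 0 <= c * f x by rewrite mulr_ge0 // ltW.
    by rewrite !max_r ?lee_fin ?mule0 ?oppr_le0.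
  have cx : c * f x < 0 by rewrite pmulr_rlt0.
  by rewrite !max_l ?lee_fin ?oppr_ge0 ?ltW // -EFinM mulrN.
by rewrite !nnZ // fine_pscale // integral_ge0.
Qed.

Lemma RintN (f : T -> R) :
  Rintegral mu setT (fun x => - f x) = - Rintegral mu setT f.
Proof.
rewrite /Rintegral integralE [in RHS]integralE.
have -> : (fun x => (- f x)%:E) = (\- (fun x => (f x)%:E))%E by [].
rewrite funeposN funenegN fine_swap //; exact: integral_ge0.
Qed.

Lemma Rint_scale (f : T -> R) (c : R) :
  Rintegral mu setT (fun x => c * f x) = c * Rintegral mu setT f.
Proof.
case: (ltgtP c 0) => c0.
- rewrite -[c]opprK; under eq_fun do rewrite mulNr.
  by rewrite RintN Rint_pscale ?oppr_gt0 // !mulNr !opprK.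
- exact: Rint_pscale.
- rewrite c0 mul0r; under eq_fun do rewrite mul0r.
  by rewrite /Rintegral integral0.
Qed.
End rint.

Section der.
Context {R : realType} {V : normedModType R}.

Lemma D1E (f : V -> R) x v : 'D_v f x = 'D_1 (fun h : R => f (h *: v + x)) 0.
Proof.
rewrite /derive; set g1 := fun h => h^-1 *: _; set g2 := fun h => h^-1 *: _.
suff -> : g1 = g2 by [].
by rewrite funeqE /g1 /g2 => h /=; rewrite addr0 scale0r add0r [_%:A]mulr1.
Qed.

Lemma dchain (f : V -> R) (g : R -> R) x v df dg :
  is_derive x v f df -> is_derive (f x) 1 g dg ->
  is_derive x v (fun y => g (f y)) (dg * df).
Proof.
move=> [fd fv] [gd gv].
have F1 : derivable (fun h : R => f (h *: v + x)) 0 1 by exact: (derivable1P f x v).1 fd.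
have e0 : (fun h : R => f (h *: v + x)) 0 = f x by rewrite scale0r add0r.
have G1 : derivable g ((fun h : R => f (h *: v + x)) 0) 1 by rewrite e0.
split.
- apply/(derivable1P (fun y => g (f y)) x v); apply/derivable1_diffP.
  apply: (@differentiable_comp _ _ _ _ (fun h : R => f (h *: v + x)) g).
    exact/derivable1_diffP.
  exact/derivable1_diffP.
- rewrite D1E -derive1E; move: (derive1_comp F1 G1) => /= ->.
  by rewrite scale0r add0r !derive1E gv -D1E fv.
Qed.

Lemma dadd (f g : V -> R) x v df dg :
  is_derive x v f df -> is_derive x v g dg ->
  is_derive x v (fun y => f y + g y) (df + dg).
Proof. move=> F G; exact: (is_deriveD F G). Qed.

Lemma dmul (f g : V -> R) x v df dg :
  is_derive x v f df -> is_derive x v g dg ->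
  is_derive x v (fun y => f y * g y) (f x * dg + g x * df).
Proof. move=> F G; exact: (is_deriveM F G). Qed.

Lemma dcst (a : R) x v : is_derive x v (fun _ : V => a) 0.
Proof. exact: is_derive_cst. Qed.

Lemma dinv (y : R) : y != 0 -> is_derive y 1 (fun t : R => t^-1) (- y ^- 2).
Proof.
move=> y0; split.
  by apply: (@derivableV _ _ id).
by rewrite (@deriveV _ _ id) // derive_id /= [_ *: _]mulr1.
Qed.

End der.

Lemma phi_der {R : realType} (c P S t : R) : 0 < c -> 0 < P -> 0 <= S -> 0 < t ->
  is_derive t 1 (fun t => t * ln (c * (P / t) + c * S))
    (ln (c * (P / t) + c * S) - c * (P / t) / (c * (P / t) + c * S)).
Proof.
move=> c0 P0 S0 t0.
have A0 : 0 < c * (P / t) + c * S.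
  have h1 : 0 < c * (P / t) by rewrite mulr_gt0 // divr_gt0.
  have h2 : 0 <= c * S by rewrite mulr_ge0 // ltW.
  lra.
have tn0 : t != 0 by rewrite gt_eqF.
have hA := dadd (dmul (dcst c t 1) (dmul (dcst P t 1) (dinv tn0))) (dcst (c * S) t 1).
have hp := dmul (@is_derive_id _ R t 1) (dchain hA (is_derive1_ln A0)).
apply: (is_derive_eq hp).
have An0 : c * (P / t) + c * S != 0 by rewrite gt_eqF.
move: An0; set A := c * (P / t) + c * S => An0.
rewrite /=. field. by rewrite An0 tn0.
Qed.



Section iid.
Context (R : realType) (d : nat) (mu : {measure set Rd R d -> \bar R})
  (q : 'rV[R]_d -> R).

Lemma iid_ext m (f f' : seq 'rV[R]_d -> R) :
  (forall s, size s = m -> f s = f' s) -> iid_exp mu q m f = iid_exp mu q m f'.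
Proof.
elim: m f f' => [|m IH] f f' H /=; first exact: H.
congr Rintegral; apply/funext => z; congr (_ * _); apply: IH => s hs.
by apply: H; rewrite /= hs.
Qed.

Lemma iid_scale m (f : seq 'rV[R]_d -> R) c :
  iid_exp mu q m (fun s => c * f s) = c * iid_exp mu q m f.
Proof.
elim: m f => [|m IH] f //=.
rewrite -Rint_scale; congr Rintegral; apply/funext => z.
by rewrite (IH (fun s => f (z :: s))) mulrCA.
Qed.
End iid.

Lemma dsub {R : realType} {V : normedModType R} (f g : V -> R) x v df dg :
  is_derive x v f df -> is_derive x v g dg ->
  is_derive x v (fun y => f y - g y) (df - dg).
Proof. move=> F G; exact: (is_deriveB F G). Qed.

Lemma insE {R : realType} {d K : nat} (n : 'I_K) (y z : 'rV[R]_d) s (i : 'I_K) :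
  size s = K.-1 -> i != n -> ins n y s i = ins n z s i.
Proof.
move=> hs hin; have := ltn_ord i; have := ltn_ord n; rewrite /ins.
case: ifP => hi Kn Ki.
  by apply: set_nth_default; rewrite hs; lia.
rewrite (negbTE hin); apply: set_nth_default; rewrite hs.
have : (n < i)%N by rewrite ltn_neqAle eq_sym hin /= leqNgt hi.
lia.
Qed.

Unset Implicit Arguments. Set Strict Implicit.

Theorem proposition1 (R : realType) (d : nat)
    (mu : {measure set Rd R d -> \bar R})
    (p q : 'rV[R]_d -> R) (K : nat) (n : 'I_K) :
  is_lebesgue_Rd mu ->
  (forall z, 0 < p z) -> (forall z, differentiable p z) ->
  is_P2_density mu q -> (forall z, 0 < q z) -> (forall z, differentiable q z) ->
  (* regularity: d/d(eps) commutes with the expectations defining F_n *)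
  (forall h : 'rV[R]_d -> R, measurable_fun [set: Rd R d] h ->
     (exists2 e0 : R, 0 < e0 &
        forall e : R, 0 < e < e0 -> is_P2_density mu (fun z => q z + e * h z)) ->
     (fun e : R => (Fn mu p q n (fun z => q z + e * h z) - Fn mu p q n q) / e)
       @ 0^'+ -->
     Rintegral mu [set: Rd R d] (fun z : 'rV[R]_d =>
       iid_exp mu q K.-1 (fun s =>
         derive1 (fun e : R => (q z + e * h z) * Fint p q n (fun y => q y + e * h y) z s) 0))) ->
  (* regularity: grad_z commutes with the expectation over the z_i, i <> n *)
  (let g := fun (z : 'rV[R]_d) (s : seq 'rV[R]_d) =>
        derive1 (fun t : R => t * Fint p q n (fun _ => t) z s) (q z) in
   forall z : 'rV[R]_d,
     differentiable (fun y => iid_exp mu q K.-1 (g y)) z /\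
     grad (fun y => iid_exp mu q K.-1 (g y)) z =
       \row_(j < d) iid_exp mu q K.-1 (fun s => grad (fun y => g y s) z 0 j)) ->
  exists V : 'rV[R]_d -> R,
    is_first_variation mu (Fn mu p q n) q V /\
    forall z : 'rV[R]_d, differentiable V z /\
      grad V z =
        \row_(j < d) iid_exp mu q K.-1 (fun s =>
          ((p z / q z) / (\sum_(i < K) p (ins n z s i) / q (ins n z s i))) ^+ 2
          * grad (fun y => ln (p y / q y)) z 0 j).
Proof.
move=> leb p0 dp qP q0 dq H1 H2.
have K0 : (0 < K)%N by apply: (leq_ltn_trans (leq0n n) (ltn_ord n)).
pose c : R := K%:R^-1.
have c0 : 0 < c by rewrite /c invr_gt0 ltr0n.
pose S (y : 'rV[R]_d) (s : seq 'rV[R]_d) :=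
  \sum_(i < K | i != n) p (ins n y s i) / q (ins n y s i).
have S0 : forall y s, 0 <= S y s.
  by move=> y s; apply: sumr_ge0 => i _; rewrite divr_ge0 // ltW.
pose g := fun (z : 'rV[R]_d) (s : seq 'rV[R]_d) =>
  derive1 (fun t : R => t * Fint p q n (fun _ => t) z s) (q z).
have gE : forall y s, g y s = ln (c * (p y / q y) + c * S y s)
    - c * (p y / q y) / (c * (p y / q y) + c * S y s).
  move=> y s; have [_ dv] := phi_der c0 (p0 y) (S0 y s) (q0 y).
  rewrite /g derive1E; exact: dv.
exists (fun y => iid_exp mu q K.-1 (g y)); split.
- move=> h mh hex; have L := H1 h mh hex.
  suff -> : (fun z => iid_exp mu q K.-1 (g z) * h z) = (fun z =>
       iid_exp mu q K.-1 (fun s => derive1 (fun e : R =>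
         (q z + e * h z) * Fint p q n (fun y => q y + e * h y) z s) 0)) by [].
  apply/funext => z; rewrite mulrC -iid_scale; congr iid_exp; apply/funext => s.
  pose phi := fun t : R => t * ln (c * (p z / t) + c * S z s).
  pose aff := fun e : R => q z + e * h z.
  have [dphi _] := phi_der c0 (p0 z) (S0 z s) (q0 z).
  have dphi' : derivable phi (aff 0) 1 by rewrite /aff mul0r addr0.
  have ha := dadd (dcst (q z) (0:R) 1) (dmul (is_derive_id (0:R) 1) (dcst (h z) (0:R) 1)).
  have [dha ha'] := ha.
  have dha2 : derivable aff 0 1 by exact: dha.
  have E := @derive1_comp R aff phi 0 dha2 dphi'.
  have E2 : derive1 phi (aff 0) * derive1 aff 0 = h z * g z s.
    have ha2 : 'D_1 aff 0 = 0 + ((0:R) * 0 + h z * 1) by exact: ha'.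
    rewrite !derive1E ha2 /aff mul0r addr0 add0r mul0r add0r mulr1 mulrC.
    by rewrite /g derive1E.
  by rewrite -E2 -E.
- move=> z; have [dV gV] := H2 z; split; first exact: dV.
  rewrite gV; apply/rowP => j; rewrite !mxE.
  apply: iid_ext => s hs; rewrite /grad !mxE.
  set v := delta_mx 0 j.
  have Sc : forall y, S y s = S z s.
    by move=> y; apply: eq_bigr => i hin; rewrite (insE y z hs hin).
  pose G := fun y => ln (c * (p y / q y) + c * S z s)
    - c * (p y / q y) / (c * (p y / q y) + c * S z s).
  have -> : (fun y : 'rV[R]_d =>
     derive1 (fun t : R => t * Fint p q n (fun _ => t) y s) (q y)) = G.
    by apply/funext => y; rewrite /G -(Sc y); exact: gE.
  have qn : q z != 0 by rewrite gt_eqF.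
  have [Dw hw] : exists Dw, is_derive z v (fun y => p y / q y) Dw.
    eexists; apply: dmul.
      by apply: derivableP; apply: diff_derivable; exact: dp.
    apply: dchain; last exact: (dinv qn).
    by apply: derivableP; apply: diff_derivable; exact: dq.
  have w0 : 0 < p z / q z by rewrite divr_gt0.
  have A0 : 0 < c * (p z / q z) + c * S z s.
    have h1 : 0 < c * (p z / q z) by rewrite mulr_gt0.
    have h2 : 0 <= c * S z s by rewrite mulr_ge0 // ltW.
    lra.
  have An0 : c * (p z / q z) + c * S z s != 0 by rewrite gt_eqF.
  have hlnw := dchain hw (is_derive1_ln w0).
  have hA := dadd (dmul (dcst c z v) hw) (dcst (c * S z s) z v).
  have hL := dchain hA (is_derive1_ln A0).
  have hB := dmul (dmul (dcst c z v) hw) (dchain hA (dinv An0)).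
  have hG := dsub hL hB.
  have [_ ->] := hG.
  have [_ ->] := hlnw.
  have insn : ins n z s n = z by rewrite /ins ltnn eqxx.
  rewrite (bigD1 n) //= insn -/(S z s).
  have wn0 : p z / q z != 0 by rewrite gt_eqF.
  have Sn0 : p z / q z + S z s != 0.
    by rewrite gt_eqF // ltr_wpDr ?S0.
  have cn0 : c != 0 by rewrite gt_eqF.
  move: wn0 Sn0 An0; set w := p z / q z; set T := S z s => wn0 Sn0 An0.
  simpl. field.
  by rewrite wn0 Sn0 An0.
Qed.
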